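(* Let $(Q_t)_{t\ge0}$ be the semigroup of the Bessel-3 process, i.e. for $x>0$, $t>0$ and measurable $f$, $$Q_t f(x) = \int_0^\infty f(y)\,\frac{2}{\sqrt{2\pi t}}\,\frac{y}{x}\sinh\!\Big(\frac{xy}{t}\Big)e^{-\frac{x^2+y^2}{2t}}\,dy,$$ and for a probability measure $\mu$ on $(0,+\infty)$ write $\mu Q_t f := \int_{(0,\infty)} Q_t f(x)\,\mu(dx)$. Let $\gamma(dx) = x^2\,dx$ on $\mathbb{R}_+$ and $K_t := \frac{t\sqrt{2\pi t}}{2}$. Let $f$ be a measurable function such that $$C_f := \frac12\int_{\mathbb{R}_+}|f(x)|x^2\,dx<\infty \quad\text{and}\quad C'_f := \frac12\int_{\mathbb{R}_+}|f(x)|x^4\,dx<\infty.$$ Then for any $t>0$ and any probability measure $\mu$ supported on $(0,+\infty)$ with $\int_0^\infty x^2\mu(dx)<+\infty$, $$|\gamma(f) - K_t\,\mu Q_t f| \le \frac{C_f\int_0^\infty x^2\mu(dx) + C'_f}{t}.$$ If moreover $f$ is positive, then $$t\,\big(\gamma(f) - K_t\,\mu Q_t f\big) \xrightarrow[t\to\infty]{} \int_0^\infty\int_0^\infty f(y)\,\frac{y^2(x^2+y^2)}{2}\,dy\,\mu(dx).$$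
   Context: The Bessel-3 process is the diffusion $dY_t = dB_t + \frac{1}{Y_t}dt$; the displayed formula is the density of its transition kernel. *)

(* Defs.v *)
From HB Require Import structures.
From mathcomp Require Import all_boot all_order all_algebra.
From mathcomp Require Import all_classical all_reals all_analysis.
Set Implicit Arguments. Unset Strict Implicit. Unset Printing Implicit Defensive.
Import Order.TTheory GRing.Theory Num.Theory.
Import numFieldNormedType.Exports.
Local Open Scope classical_set_scope.
Local Open Scope ring_scope.

Section Bessel3.
Variable R : realType.

Definition sinhR (z : R) : R := (expR z - expR (- z)) / 2.

Definition bes3_density (t x y : R) : R :=
  2 / Num.sqrt (2 * pi * t) * (y / x) * sinhR (x * y / t)
    * expR (- (x ^+ 2 + y ^+ 2) / (2 * t)).

Definition Qt (t : R) (f : R -> R) (x : R) : R :=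
  Rintegral lebesgue_measure `]0, +oo[ (fun y => f y * bes3_density t x y).

Definition muQt (mu : probability R R) (t : R) (f : R -> R) : R :=
  Rintegral mu `]0, +oo[ (Qt t f).

Definition gammaR (f : R -> R) : R :=
  Rintegral lebesgue_measure `[0, +oo[ (fun x => f x * x ^+ 2).

Definition Kt (t : R) : R := t * Num.sqrt (2 * pi * t) / 2.

Definition Cf (f : R -> R) : R :=
  2^-1 * Rintegral lebesgue_measure `[0, +oo[ (fun x => `|f x| * x ^+ 2).

Definition Cf' (f : R -> R) : R :=
  2^-1 * Rintegral lebesgue_measure `[0, +oo[ (fun x => `|f x| * x ^+ 4).

End Bessel3.

(* Main.v *)
Require Import Defs.
From HB Require Import structures.
From mathcomp Require Import all_boot all_order all_algebra.
From mathcomp Require Import all_classical all_reals all_analysis.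
From mathcomp Require Import ring lra measurable_realfun.
Import Order.TTheory GRing.Theory Num.Theory.
Import numFieldNormedType.Exports.
Local Open Scope classical_set_scope.
Local Open Scope ring_scope.
Set Implicit Arguments.
Unset Strict Implicit.

Section calc.
Variable R : realType.

Lemma mono_helper (f df : R -> R) (a b : R) :
  (forall x : R, is_derive x (1:R) f (df x)) -> a <= b ->
  (forall c, a <= c -> c <= b -> 0 <= df c) -> f a <= f b.
Proof.
move=> fd ab dpos.
have dv : forall x, derivable f x 1 by move=> x; case: (fd x).
have [c] := @MVT_segment R f df a b ab (fun x _ => fd x)
  (derivable_within_continuous (fun x _ => dv x)).
rewrite in_itv /= => /andP[ac cb] E.
rewrite -subr_ge0 E; apply: mulr_ge0; [exact: dpos|by rewrite subr_ge0].
Qed.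

Definition phi (v : R) := expR v - 1 - v.
Definition psi (v : R) := expR v - 1 - v - v ^+ 2 / 2.
Definition chi (v : R) := expR v - 1 - v - v ^+ 2 / 2 - v ^+ 3 / 6.

Lemma psi_deriv (x : R) : is_derive x (1:R) psi (expR x - 1 - x).
Proof.
rewrite /psi; apply: is_derive_eq.
rewrite ?scaler0 ?add0r ?addr0 ?subr0 ?scaleN0.
rewrite /GRing.scale /= !mulr1.
by field.
Qed.

Lemma mphi_deriv (x : R) : is_derive x (1:R) (fun v => - phi v) (1 - expR x).
Proof.
rewrite /phi; apply: is_derive_eq.
rewrite ?scaler0 ?add0r ?addr0 ?subr0 ?scaleN0.
rewrite /GRing.scale /= ?mulr1.
by field.
Qed.

Lemma mchi_deriv (x : R) : is_derive x (1:R) (fun v => - chi v) (- psi x).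
Proof.
rewrite /chi /psi; apply: is_derive_eq.
rewrite ?scaler0 ?add0r ?addr0 ?subr0 ?scaleN0.
rewrite /GRing.scale /= ?mulr1.
by field.
Qed.

Lemma psi0 : psi 0 = 0.
Proof. by rewrite /psi expR0 expr0n /= mul0r !subr0 subrr. Qed.
Lemma chi0 : chi 0 = 0.
Proof. by rewrite /chi expR0 !expr0n /= !mul0r !subr0 subrr. Qed.

Lemma psi_mono (a b : R) : a <= b -> psi a <= psi b.
Proof.
move=> ab; apply: (@mono_helper psi (fun x => expR x - 1 - x) a b psi_deriv ab) => c _ _.
by have := expR_ge1Dx c; lra.
Qed.

Lemma psi_le0 (v : R) : v <= 0 -> psi v <= 0.
Proof. by move=> v0; rewrite -psi0 psi_mono. Qed.

Lemma phi_anti (a b : R) : a <= b -> b <= 0 -> phi b <= phi a.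
Proof.
move=> ab b0; rewrite -lerN2; apply: (@mono_helper (fun v => - phi v) (fun x => 1 - expR x) a b mphi_deriv ab) => c _ cb.
by rewrite subr_ge0 -expR0 ler_expR (le_trans cb).
Qed.

Lemma chi_ge0 (v : R) : v <= 0 -> 0 <= chi v.
Proof.
move=> v0; rewrite -chi0 -lerN2; apply: (@mono_helper (fun v => - chi v) (fun x => - psi x) v 0 mchi_deriv v0) => c _ c0.
by rewrite oppr_ge0 psi_le0.
Qed.


Lemma kernel_eq (t x y : R) : 0 < t -> 0 < x ->
  Kt t * bes3_density t x y =
  t * y / (2 * x) * (expR (- ((x - y) ^+ 2 / 2 / t)) - expR (- ((x + y) ^+ 2 / 2 / t))).
Proof.
move=> t0 x0.
have s0 : 0 < Num.sqrt (2 * pi * t).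
  by rewrite sqrtr_gt0 mulr_gt0 // mulr_gt0 // pi_gt0.
have E1 : expR (x * y / t) * expR (- (x ^+ 2 + y ^+ 2) / (2 * t)) =
   expR (- ((x - y) ^+ 2 / 2 / t)).
  by rewrite -expRD; congr expR; field; rewrite gt_eqF.
have E2 : expR (- (x * y / t)) * expR (- (x ^+ 2 + y ^+ 2) / (2 * t)) =
   expR (- ((x + y) ^+ 2 / 2 / t)).
  by rewrite -expRD; congr expR; field; rewrite gt_eqF.
rewrite /Kt /bes3_density /sinhR -E1 -E2.
field.
by rewrite !gt_eqF.
Qed.

Lemma delta_eq (t x y : R) : 0 < t -> 0 < x ->
  y ^+ 2 - Kt t * bes3_density t x y =
  t * y / (2 * x) * (phi (- ((x + y) ^+ 2 / 2 / t)) - phi (- ((x - y) ^+ 2 / 2 / t))).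
Proof.
move=> t0 x0; rewrite kernel_eq // /phi.
by field; rewrite !gt_eqF.
Qed.

Lemma psi_bounds (v : R) : v <= 0 -> v ^+ 3 / 6 <= psi v <= 0.
Proof.
move=> v0; rewrite psi_le0 // andbT.
by have := @chi_ge0 v v0; rewrite /chi /psi; lra.
Qed.

Lemma delta_bounds (t x y : R) : 0 < t -> 0 < x -> 0 <= y ->
  0 <= y ^+ 2 - Kt t * bes3_density t x y <= y ^+ 2 * (x ^+ 2 + y ^+ 2) / (2 * t).
Proof.
move=> t0 x0 y0; rewrite delta_eq //.
set a := (x - y) ^+ 2 / 2 / t; set b := (x + y) ^+ 2 / 2 / t.
have a0 : 0 <= a by rewrite /a; apply: divr_ge0; [apply: divr_ge0; [apply: sqr_ge0|]|apply: ltW].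
have ab : a <= b.
  rewrite /a /b ler_pM2r ?invr_gt0 // ler_pM2r ?invr_gt0 //.
  rewrite -subr_ge0 -[X in 0 <= X]/((x + y) ^+ 2 - (x - y) ^+ 2).
  have -> : (x + y) ^+ 2 - (x - y) ^+ 2 = 4 * (x * y) by ring.
  by rewrite mulr_ge0 // mulr_ge0 // ltW.
have c0 : 0 <= t * y / (2 * x).
  by apply: divr_ge0; apply: mulr_ge0 => //; apply: ltW.
have F1 := @phi_anti (- b) (- a).
have F2 := @psi_mono (- b) (- a).
rewrite lerN2 oppr_le0 in F1 F2.
have := F1 ab a0; have := F2 ab; move=> {F1 F2} F2 F1.
have eqT : y ^+ 2 * (x ^+ 2 + y ^+ 2) / (2 * t) =
  t * y / (2 * x) * ((b ^+ 2 - a ^+ 2) / 2).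
  by rewrite /a /b; field; rewrite !gt_eqF.
rewrite eqT; apply/andP; split.
  by apply: mulr_ge0 => //; rewrite subr_ge0.
apply: ler_wpM2l => //.
move: F2; rewrite /psi /phi !sqrrN. lra.
Qed.

Lemma delta_lim_bound (t x y : R) : 0 < t -> 0 < x -> 0 <= y ->
  `| t * (y ^+ 2 - Kt t * bes3_density t x y) - y ^+ 2 * (x ^+ 2 + y ^+ 2) / 2 |
   <= y * (((x - y) ^+ 2 / 2) ^+ 3 + ((x + y) ^+ 2 / 2) ^+ 3) / (12 * x) / t.
Proof.
move=> t0 x0 y0; rewrite delta_eq //.
set a := (x - y) ^+ 2 / 2 / t; set b := (x + y) ^+ 2 / 2 / t.
have a0 : 0 <= a by rewrite /a; apply: divr_ge0; [apply: divr_ge0; [apply: sqr_ge0|]|apply: ltW].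
have b0 : 0 <= b by rewrite /b; apply: divr_ge0; [apply: divr_ge0; [apply: sqr_ge0|]|apply: ltW].
have c0 : 0 <= t * (t * y / (2 * x)).
  by apply: mulr_ge0; [apply: ltW|apply: divr_ge0; apply: mulr_ge0 => //; apply: ltW].
have eq1 : t * (t * y / (2 * x) * (phi (- b) - phi (- a))) -
    y ^+ 2 * (x ^+ 2 + y ^+ 2) / 2 =
    t * (t * y / (2 * x)) * (psi (- b) - psi (- a)).
  by rewrite /psi /phi /a /b !sqrrN; field; rewrite !gt_eqF.
have eq2 : y * (((x - y) ^+ 2 / 2) ^+ 3 + ((x + y) ^+ 2 / 2) ^+ 3) / (12 * x) / t
   = t * (t * y / (2 * x)) * ((a ^+ 3 + b ^+ 3) / 6).
  by rewrite /a /b; field; rewrite !gt_eqF.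
rewrite eq1 eq2 normrM (ger0_norm c0); apply: ler_wpM2l => //.
have := @psi_bounds (- a); have := @psi_bounds (- b).
have e3 : forall z : R, (- z) ^+ 3 = - z ^+ 3 by move=> z; ring.
rewrite !oppr_le0 a0 b0 !e3 => /(_ isT) /andP[h1 h2] /(_ isT) /andP[h3 h4].
rewrite ler_norml; apply/andP; split; lra.
Qed.
End calc.

Section meas.
Variable R : realType.
Local Notation leb := (@lebesgue_measure R).

Lemma measurable_inv : measurable_fun [set: R] (@GRing.inv R).
Proof.
have -> : (@GRing.inv R) = (fun x => if x == 0 then 0 else x^-1).
  by apply/funext => x; case: eqP => // ->; rewrite invr0.
apply: measurable_fun_ifT.
- apply: measurable_fun_eqr => //.
- exact: measurable_cst.
- rewrite (_ : [set: R] = [set x | x != 0] `|` [set 0]); last first.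
    by apply/seteqP; split => x //= _; case: eqP => /=; [right|left].
  have o0 : open [set x : R | x != 0].
    rewrite (_ : [set x : R | x != 0] = ~` [set 0]); last by apply/seteqP; split => x /= /eqP.
    apply: closed_openC.
    apply: compact_closed; [exact: Rhausdorff | exact: compact_set1].
  apply/measurable_funU => //.
    exact: open_measurable.
  split; last exact: measurable_fun_set1.
  apply: open_continuous_measurable_fun => //.
  move=> x; rewrite inE /= => x0; exact: inv_continuous.
Qed.

Lemma param_meas (F : R * R -> R) : measurable_fun setT F ->
  measurable_fun setT (fun x => Rintegral leb setT (fun y => F (x, y))).
Proof.
move=> mF; rewrite /Rintegral.
have mEF : measurable_fun setT (EFin \o F) by apply/measurable_EFinP.
have mG : measurable_fun setT (fun x => (\int[leb]_(y in setT) (F (x, y))%:E)%E).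
  rewrite (_ : (fun x => _) = (fun x => fubini_F leb ((EFin \o F)^\+)%E x - fubini_F leb ((EFin \o F)^\-)%E x)%E); last first.
    apply/funext => x; rewrite integralE /fubini_F; congr (_ - _)%E; apply: eq_integral => y _; by rewrite ?funeposE ?funenegE.
  have h1 : measurable_fun setT (fubini_F leb ((EFin \o F)^\+)%E).
    apply: measurable_fun_fubini_tonelli_F => //.
    exact: measurable_funepos.
  have h2 : measurable_fun setT (fubini_F leb ((EFin \o F)^\-)%E).
    apply: measurable_fun_fubini_tonelli_F => //.
    exact: measurable_funeneg.
  exact (emeasurable_funB h1 h2).
exact: (measurableT_comp _ mG).
Qed.


Definition Dx (t x y : R) := y ^+ 2 - t * y / (2 * x) *
  (expR (- ((x - y) ^+ 2 / 2 / t)) - expR (- ((x + y) ^+ 2 / 2 / t))).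

Lemma meas_Dx (t : R) : measurable_fun setT (fun p : R * R => Dx t p.1 p.2).
Proof.
rewrite /Dx.
apply: measurable_funB.
  exact: measurable_funX measurable_snd.
apply: measurable_funM.
  apply: measurable_funM.
    apply: measurable_funM; [exact: measurable_cst|exact: measurable_snd].
  apply: measurableT_comp; first exact: measurable_inv.
  apply: measurable_funM; [exact: measurable_cst|exact: measurable_fst].
apply: measurable_funB.
  apply: measurableT_comp; first exact: measurable_expR.
  apply: measurable_funN.
  apply: measurable_funM; last exact: measurable_cst.
  apply: measurable_funM; last exact: measurable_cst.
  apply: measurable_funX; apply: measurable_funB; [exact: measurable_fst|exact: measurable_snd].
apply: measurableT_comp; first exact: measurable_expR.
apply: measurable_funN.
apply: measurable_funM; last exact: measurable_cst.
apply: measurable_funM; last exact: measurable_cst.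
apply: measurable_funX; apply: measurable_funD; [exact: measurable_fst|exact: measurable_snd].
Qed.

Lemma meas_G (t : R) (f : R -> R) : measurable_fun setT f ->
  measurable_fun setT (fun x => Rintegral leb `]0, +oo[ (fun y => f y * Dx t x y)).
Proof.
move=> mf.
rewrite (_ : (fun x => _) = (fun x => Rintegral leb setT
   (fun y => (fun p : R * R => f p.2 * Dx t p.1 p.2 * \1_(`]0, +oo[ : set R) p.2) (x, y)))).
  have mF : measurable_fun setT (fun p : R * R => f p.2 * Dx t p.1 p.2 * \1_(`]0, +oo[ : set R) p.2).
  apply: measurable_funM; last first.
    apply: measurableT_comp; last exact: measurable_snd.
    by apply/measurable_indicP.
  apply: measurable_funM; last exact: meas_Dx.
  exact: measurableT_comp mf measurable_snd.
  exact (param_meas mF).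
apply/funext => x; rewrite Rintegral_mkcond patch_indic.
by [].
Qed.
End meas.

Section intR.
Context {d} {T : measurableType d} {R : realType} {mu : {measure set T -> \bar R}}.
Context {D : set T} (mD : measurable D).

Lemma intR_le (g h : T -> R) : measurable_fun D g ->
  (forall x, D x -> `|g x| <= h x) -> mu.-integrable D (EFin \o h) ->
  mu.-integrable D (EFin \o g).
Proof.
move=> mg gh ih; apply: le_integrable ih => //.
  exact/measurable_EFinP.
move=> x Dx /=; rewrite lee_fin (le_trans (gh x Dx)) //.
by rewrite ler_norm.
Qed.

Lemma intR_add (g h : T -> R) : mu.-integrable D (EFin \o g) ->
  mu.-integrable D (EFin \o h) -> mu.-integrable D (EFin \o (fun x => g x + h x)).
Proof.
move=> ig ih; apply: (eq_integrable mD _ _ _ (integrableD mD ig ih)) => x _ /=.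
by rewrite EFinD.
Qed.

Lemma intR_sub (g h : T -> R) : mu.-integrable D (EFin \o g) ->
  mu.-integrable D (EFin \o h) -> mu.-integrable D (EFin \o (fun x => g x - h x)).
Proof.
move=> ig ih; apply: (eq_integrable mD _ _ _ (integrableB mD ig ih)) => x _ /=.
by rewrite EFinB.
Qed.

Lemma intR_scale (k : R) (g : T -> R) : mu.-integrable D (EFin \o g) ->
  mu.-integrable D (EFin \o (fun x => k * g x)).
Proof.
move=> ig; apply: (eq_integrable mD _ _ _ (integrableZl mD k ig)) => x _ /=.
by rewrite EFinM.
Qed.

Lemma intR_eq (g h : T -> R) : (forall x, D x -> g x = h x) ->
  mu.-integrable D (EFin \o g) -> mu.-integrable D (EFin \o h).
Proof.
move=> gh; apply: eq_integrable => // x /[!inE] Dx /=; by rewrite gh.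
Qed.

End intR.


Lemma cvg_bound (R : realType) (s u : nat -> R) (l K : R) :
  s n @[n --> \oo] --> +oo -> (forall n, 0 < s n) ->
  (forall n, `|u n - l| <= K / s n) -> u n @[n --> \oo] --> l.
Proof.
move=> hs s0 hb; apply/cvgrPdist_le => e e0.
move/cvgryPge: hs => /(_ (K / e)).
apply: filterS => n hn.
rewrite distrC; apply: le_trans (hb n) _.
rewrite ler_pdivrMr //.
by rewrite ler_pdivrMr // mulrC in hn.
Qed.

Section main.
Variable R : realType.
Local Notation leb := (@lebesgue_measure R).
Local Notation I := (`]0, +oo[%classic : set R).
Variable f : R -> R.
Hypothesis mf : measurable_fun setT f.
Hypothesis i2 : leb.-integrable `[0, +oo[ (fun x => (`|f x| * x ^+ 2)%:E).
Hypothesis i4 : leb.-integrable `[0, +oo[ (fun x => (`|f x| * x ^+ 4)%:E).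

Definition Delta (t x y : R) := y ^+ 2 - Kt t * bes3_density t x y.

Lemma mI : measurable I.
Proof. by []. Qed.

Lemma mIL : measurable (I : set (measurableTypeR R)).
Proof. exact: mI. Qed.

Lemma mfL : measurable_fun (I : set (measurableTypeR R)) f.
Proof. have h := measurable_funS measurableT (@subsetT _ I) mf; exact h. Qed.

Lemma IsubC : I `<=` `[0, +oo[.
Proof. by move=> y; rewrite /= !in_itv /= !andbT => /ltW. Qed.

Lemma i2I : leb.-integrable I (EFin \o (fun y => `|f y| * y ^+ 2)).
Proof. apply: (integrableS _ _ _ i2) => //; exact: IsubC. Qed.

Lemma i4I : leb.-integrable I (EFin \o (fun y => `|f y| * y ^+ 4)).
Proof. apply: (integrableS _ _ _ i4) => //; exact: IsubC. Qed.

Lemma mfI : measurable_fun I f.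
Proof. exact: measurable_funS mf. Qed.

Lemma if2I : leb.-integrable I (EFin \o (fun y => f y * y ^+ 2)).
Proof.
apply: (@intR_le _ _ _ _ _ mIL _ (fun y => `|f y| * y ^+ 2)); last exact: i2I.
  by apply: measurable_funM; [exact: mfL|exact: measurable_funX].
by move=> y _; rewrite normrM normrX real_normK ?num_real.
Qed.

Lemma if4I : leb.-integrable I (EFin \o (fun y => f y * y ^+ 4)).
Proof.
apply: (@intR_le _ _ _ _ _ mIL _ (fun y => `|f y| * y ^+ 4)); last exact: i4I.
  by apply: measurable_funM; [exact: mfL|exact: measurable_funX].
move=> y _; rewrite normrM (@ger0_norm _ (y ^+ 4)) //.
by rewrite (_ : y ^+ 4 = (y ^+ 2) ^+ 2) ?sqr_ge0 // -exprM.
Qed.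


Lemma Delta_Dx t x y : 0 < t -> 0 < x -> Delta t x y = Dx t x y.
Proof. by move=> t0 x0; rewrite /Delta /Dx kernel_eq. Qed.

Lemma meas_Delta_y t x : 0 < t -> 0 < x ->
  measurable_fun (I : set (measurableTypeR R)) (fun y => Delta t x y).
Proof.
move=> t0 x0.
have h : measurable_fun setT ((fun p : R * R => Dx t p.1 p.2) \o pair x).
  exact: measurableT_comp (meas_Dx t) (measurable_pair1 x).
have h2 := measurable_funS measurableT (@subsetT _ I) h.
apply: eq_measurable_fun h2 => y _ /=; by rewrite Delta_Dx.
Qed.

Lemma Delta_ge0 t x y : 0 < t -> 0 < x -> 0 <= y -> 0 <= Delta t x y.
Proof. by move=> t0 x0 y0; case/andP: (@delta_bounds R t x y t0 x0 y0). Qed.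

Lemma Delta_le t x y : 0 < t -> 0 < x -> 0 <= y ->
  Delta t x y <= y ^+ 2 * (x ^+ 2 + y ^+ 2) / (2 * t).
Proof. by move=> t0 x0 y0; case/andP: (@delta_bounds R t x y t0 x0 y0). Qed.

Definition hb (t x y : R) := x ^+ 2 / (2 * t) * (`|f y| * y ^+ 2) + 1 / (2 * t) * (`|f y| * y ^+ 4).

Lemma ihb t x : leb.-integrable I (EFin \o hb t x).
Proof. by apply: intR_add => //; apply: intR_scale => //; [exact: i2I|exact: i4I]. Qed.

Lemma fDelta_le t x y : 0 < t -> 0 < x -> 0 < y -> `|f y * Delta t x y| <= hb t x y.
Proof.
move=> t0 x0 y0; rewrite normrM (ger0_norm (Delta_ge0 t0 x0 (ltW y0))).
rewrite (_ : hb t x y = `|f y| * (y ^+ 2 * (x ^+ 2 + y ^+ 2) / (2 * t))); last first.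
  by rewrite /hb; field; rewrite gt_eqF.
by apply: ler_wpM2l => //; exact: Delta_le t0 x0 (ltW y0).
Qed.

Lemma intG t x : 0 < t -> 0 < x ->
  leb.-integrable I (EFin \o (fun y => f y * Delta t x y)).
Proof.
move=> t0 x0; apply: (@intR_le _ _ _ _ _ mIL _ (hb t x)); last exact: ihb.
  by apply: measurable_funM; [exact: mfL|exact: meas_Delta_y].
move=> y; rewrite /= in_itv /= andbT => y0; exact: fDelta_le.
Qed.

Definition A := Rintegral leb I (fun y => `|f y| * y ^+ 2).
Definition B := Rintegral leb I (fun y => `|f y| * y ^+ 4).
Definition G t x := Rintegral leb I (fun y => f y * Delta t x y).

Lemma int_hb t x : Rintegral leb I (hb t x) = (x ^+ 2 * A + B) / (2 * t).
Proof.
rewrite /hb RintegralD //; last 2 first.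
  by apply: intR_scale => //; exact: i2I.
  by apply: intR_scale => //; exact: i4I.
rewrite !RintegralZl //; try (exact: i2I); try (exact: i4I).
by rewrite /A /B; ring.
Qed.

Lemma G_bound t x : 0 < t -> 0 < x -> `|G t x| <= (x ^+ 2 * A + B) / (2 * t).
Proof.
move=> t0 x0; rewrite -int_hb.
apply: le_trans (le_normr_Rintegral mIL (intG t0 x0)) _.
apply: le_Rintegral => //.
  exact: integrable_norm (intG t0 x0).
  exact: ihb.
move=> y; rewrite /= in_itv /= andbT => y0; exact: fDelta_le.
Qed.

Lemma Kt_gt0 (t : R) : 0 < t -> 0 < Kt t.
Proof.
move=> t0; rewrite /Kt; apply: divr_gt0 => //; apply: mulr_gt0 => //.
by rewrite sqrtr_gt0 mulr_gt0 // mulr_gt0 // pi_gt0.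
Qed.

Lemma gammaE : gammaR f = Rintegral leb I (fun y => f y * y ^+ 2).
Proof. by rewrite /gammaR -Rintegral_itv_obnd_cbnd //; exact: if2I. Qed.

Lemma idens t x : 0 < t -> 0 < x ->
  leb.-integrable I (EFin \o (fun y => f y * bes3_density t x y)).
Proof.
move=> t0 x0.
apply: (@intR_eq _ _ _ _ _ mIL (fun y => (Kt t)^-1 * (f y * y ^+ 2 - f y * Delta t x y))).
  move=> y _; rewrite /Delta; field.
  by rewrite gt_eqF // Kt_gt0.
apply: intR_scale => //; apply: intR_sub => //; [exact: if2I|exact: intG].
Qed.

Lemma G_eq t x : 0 < t -> 0 < x -> gammaR f - Kt t * Qt t f x = G t x.
Proof.
move=> t0 x0.
rewrite /Qt -RintegralZl //; last exact: idens.
rewrite gammaE -RintegralB //; last 2 first.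
  exact: if2I.
  by apply: intR_scale => //; exact: idens.
by apply: eq_Rintegral => y _; rewrite /Delta; ring.
Qed.

Lemma CfE : Cf f = 2^-1 * A.
Proof. by rewrite /Cf /A -Rintegral_itv_obnd_cbnd //; exact: i2I. Qed.

Lemma Cf'E : Cf' f = 2^-1 * B.
Proof. by rewrite /Cf' /B -Rintegral_itv_obnd_cbnd //; exact: i4I. Qed.

Lemma mIR : measurable I.
Proof. by []. Qed.

Lemma measG t : 0 < t -> measurable_fun I (G t).
Proof.
move=> t0.
have h := measurable_funS measurableT (@subsetT _ I) (meas_G t mf).
apply: eq_measurable_fun h => x; rewrite inE /= in_itv /= andbT => x0.
by apply: eq_Rintegral => y _; rewrite Delta_Dx.
Qed.


Definition H x := Rintegral leb I (fun y => f y * (y ^+ 2 * (x ^+ 2 + y ^+ 2)) / 2).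

Lemma inner_cvg (s : nat -> R) x : s n @[n --> \oo] --> +oo -> (forall n, 1 <= s n) ->
  0 < x -> (s n * G (s n) x) @[n --> \oo] --> H x.
Proof.
move=> hs s1 x0.
have s0 n : 0 < s n by exact: lt_le_trans ltr01 (s1 n).
have ig : leb.-integrable I (EFin \o (fun y => `|f y| * (y ^+ 2 * (x ^+ 2 + y ^+ 2)) / 2)).
  apply: (@intR_eq _ _ _ _ _ mIL (fun y => x ^+ 2 / 2 * (`|f y| * y ^+ 2) + 1 / 2 * (`|f y| * y ^+ 4))).
    by move=> y _; ring.
  by apply: intR_add => //; apply: intR_scale => //; [exact: i2I|exact: i4I].
have mfn n : measurable_fun (I : set (measurableTypeR R)) (EFin \o (fun y => f y * (s n * Delta (s n) x y))).
  apply/measurable_EFinP; apply: measurable_funM; first exact: mfL.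
  apply: measurable_funM; first exact: measurable_cst.
  exact: meas_Delta_y.
have mlim : measurable_fun (I : set (measurableTypeR R)) (EFin \o (fun y => f y * (y ^+ 2 * (x ^+ 2 + y ^+ 2)) / 2)).
  apply/measurable_EFinP; apply: measurable_funM; last exact: measurable_cst.
  apply: measurable_funM; first exact: mfL.
  apply: measurable_funM; first exact: measurable_funX.
  by apply: measurable_funD; [exact: measurable_cst|exact: measurable_funX].
have cv : \forall y \ae leb, I y ->
   (EFin \o (fun y => f y * (s n * Delta (s n) x y))) y @[n --> \oo] -->
   (EFin \o (fun y => f y * (y ^+ 2 * (x ^+ 2 + y ^+ 2)) / 2)) y.
  apply: aeW => y; rewrite /= in_itv /= andbT => y0.
  apply: cvg_EFin; first by apply: nearW.
  apply: (@cvg_bound _ s _ _ (`|f y| * (y * (((x - y) ^+ 2 / 2) ^+ 3 + ((x + y) ^+ 2 / 2) ^+ 3) / (12 * x)))) => // n /=.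
  have h := @delta_lim_bound R (s n) x y (s0 n) x0 (ltW y0).
  rewrite (_ : f y * (s n * Delta (s n) x y) - f y * (y ^+ 2 * (x ^+ 2 + y ^+ 2)) / 2
     = f y * (s n * Delta (s n) x y - y ^+ 2 * (x ^+ 2 + y ^+ 2) / 2)); last by ring.
  by rewrite normrM -[leRHS]mulrA; apply: ler_wpM2l => //; exact: h.
have bd : \forall y \ae leb, forall n, I y ->
   (`|((f y * (s n * Delta (s n) x y))%R)%:E| <=
   ((`|f y| * (y ^+ 2 * (x ^+ 2 + y ^+ 2)) / 2)%R)%:E)%E.
  apply: aeW => y n; rewrite /= in_itv /= andbT => y0.
  rewrite lee_fin normrM -mulrA; apply: ler_wpM2l => //.
  rewrite ger0_norm; last by apply: mulr_ge0; [exact: ltW|exact: Delta_ge0 (ltW y0)].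
  rewrite -ler_pdivlMl //.
  apply: (le_trans (Delta_le (s0 n) x0 (ltW y0))).
  rewrite le_eqVlt; apply/orP; left; apply/eqP; field.
  by rewrite gt_eqF.
have [ilim _ hcv] := @dominated_convergence _ _ _ leb I mIL
  (fun n => EFin \o (fun y => f y * (s n * Delta (s n) x y)))
  (EFin \o (fun y => f y * (y ^+ 2 * (x ^+ 2 + y ^+ 2)) / 2))
  (EFin \o (fun y => `|f y| * (y ^+ 2 * (x ^+ 2 + y ^+ 2)) / 2)) mfn mlim cv ig bd.
rewrite -(fineK (integrable_fin_num mIL ilim)) in hcv.
have hf := fine_cvg hcv.
have E : (fun n => s n * G (s n) x) =
   (fun n => Rintegral leb I (fun y => f y * (s n * Delta (s n) x y))).
  apply/funext => n; rewrite /G -RintegralZl //; last exact: intG.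
  by apply: eq_Rintegral => y _; ring.
rewrite E; exact: hf.
Qed.


Lemma natS_cvg : (n%:R + 1 : R) @[n --> \oo] --> +oo.
Proof.
apply/cvgryPge => M; apply: filterS (nbhs_infty_ger M) => n h.
by apply: le_trans h _; rewrite lerDl.
Qed.

Lemma mH : measurable_fun I H.
Proof.
apply: (@measurable_fun_cvg _ _ _ _ (fun m x => (m%:R + 1) * G (m%:R + 1) x)).
  move=> m; apply: measurable_funM; first exact: measurable_cst.
  by apply: measG; rewrite ltr_pwDr.
move=> x; rewrite /= in_itv /= andbT => x0.
apply: (inner_cvg natS_cvg) => // n.
by rewrite lerDr.
Qed.

Section mu.
Variable mu : probability R R.
Hypothesis mu0 : mu [set` `]-oo, 0%R]] = 0%E.
Hypothesis imu2 : mu.-integrable `]0, +oo[ (fun x => (x ^+ 2)%:E).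

Lemma muI : mu I = 1%E.
Proof.
have U : [set: R] = [set` `]-oo, 0%R]] `|` I.
  apply/seteqP; split => x // _ /=; rewrite !in_itv /= andbT.
  by case: (leP x 0) => h; [left|right].
have m0 : mu [set` `]-oo, 0%R]] = 0%E by exact: mu0.
have := probability_setT mu; rewrite U measureU //.
  move=> h; have h' : (0 + mu I = 1)%E by rewrite -[X in (X + _)%E]m0; exact: h.
  by rewrite add0e in h'.
apply/seteqP; split => x // [] /=; rewrite !in_itv /= andbT => h1 h2.
by have := lt_le_trans h2 h1; rewrite ltxx.
Qed.

Definition hmu (t x : R) := A / (2 * t) * x ^+ 2 + B / (2 * t).

Lemma ihmu t : mu.-integrable I (EFin \o hmu t).
Proof.
apply: intR_add => //.
  by apply: intR_scale => //; exact: imu2.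
exact: finite_measure_integrable_cst.
Qed.

Lemma intGmu t : 0 < t -> mu.-integrable I (EFin \o G t).
Proof.
move=> t0; apply: (@intR_le _ _ _ _ _ mIR _ (hmu t)); last exact: ihmu.
  exact: measG.
move=> x; rewrite /= in_itv /= andbT => x0.
rewrite (_ : hmu t x = (x ^+ 2 * A + B) / (2 * t)); first exact: G_bound.
by rewrite /hmu; ring.
Qed.

Lemma main_eq t : 0 < t -> gammaR f - Kt t * muQt mu t f = Rintegral mu I (G t).
Proof.
move=> t0.
have iQ : mu.-integrable I (EFin \o Qt t f).
  apply: (@intR_eq _ _ _ _ _ mIR (fun x => (Kt t)^-1 * (gammaR f - G t x))).
    move=> x; rewrite /= in_itv /= andbT => x0; rewrite -G_eq //; field.
    by rewrite gt_eqF // Kt_gt0.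
  apply: intR_scale => //; apply: intR_sub => //.
    exact: finite_measure_integrable_cst.
  exact: intGmu.
rewrite /muQt -RintegralZl //.
transitivity (Rintegral mu I (fun x => gammaR f - Kt t * Qt t f x)).
  rewrite RintegralB //; last 2 first.
    exact: finite_measure_integrable_cst.
    by apply: intR_scale.
  rewrite Rintegral_cst // (_ : fine _ = 1) ?mulr1 //; exact: (f_equal fine muI).
apply: eq_Rintegral => x; rewrite inE /= in_itv /= andbT => x0; exact: G_eq.
Qed.

Lemma part1 t : 0 < t ->
  `|gammaR f - Kt t * muQt mu t f|
        <= (Cf f * Rintegral mu `]0, +oo[ (fun x => x ^+ 2) + Cf' f) / t.
Proof.
move=> t0; rewrite main_eq //.
apply: le_trans (le_normr_Rintegral mIR (intGmu t0)) _.
apply: le_trans (le_Rintegral mIR (integrable_norm (intGmu t0)) (ihmu t) _) _.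
  move=> x; rewrite /= in_itv /= andbT => x0.
  rewrite (_ : hmu t x = (x ^+ 2 * A + B) / (2 * t)); first exact: G_bound.
  by rewrite /hmu; ring.
rewrite /hmu RintegralD //; last 2 first.
  by apply: intR_scale => //; exact: imu2.
  exact: finite_measure_integrable_cst.
rewrite RintegralZl //; try exact: imu2.
rewrite Rintegral_cst // (_ : fine _ = 1) ?mulr1; last exact: (f_equal fine muI).
rewrite CfE Cf'E.
rewrite le_eqVlt; apply/orP; left; apply/eqP.
by field; rewrite gt_eqF.
Qed.


Lemma outer_cvg (s : nat -> R) : s n @[n --> \oo] --> +oo -> (forall n, 1 <= s n) ->
  Rintegral mu I (fun x => s n * G (s n) x) @[n --> \oo] --> Rintegral mu I H.
Proof.
move=> hs s1.
have s0 n : 0 < s n by exact: lt_le_trans ltr01 (s1 n).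
have ig : mu.-integrable I (EFin \o (fun x => A / 2 * x ^+ 2 + B / 2)).
  apply: intR_add => //.
    by apply: intR_scale => //; exact: imu2.
  exact: finite_measure_integrable_cst.
have mfn n : measurable_fun I (EFin \o (fun x => s n * G (s n) x)).
  apply/measurable_EFinP; apply: measurable_funM; first exact: measurable_cst.
  exact: measG.
have mlim : measurable_fun I (EFin \o H).
  by apply/measurable_EFinP; exact: mH.
have cv : \forall x \ae mu, I x ->
   (EFin \o (fun x => s n * G (s n) x)) x @[n --> \oo] --> (EFin \o H) x.
  apply: aeW => x; rewrite /= in_itv /= andbT => x0.
  apply: cvg_EFin; first by apply: nearW.
  exact: inner_cvg.
have bd : \forall x \ae mu, forall n, I x ->
   (`|((s n * G (s n) x)%R)%:E| <= ((A / 2 * x ^+ 2 + B / 2)%R)%:E)%E.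
  apply: aeW => x n; rewrite /= in_itv /= andbT => x0.
  rewrite lee_fin normrM (gtr0_norm (s0 n)).
  rewrite -ler_pdivlMl //.
  apply: (le_trans (G_bound (s0 n) x0)).
  rewrite le_eqVlt; apply/orP; left; apply/eqP; field.
  by rewrite gt_eqF.
have [ilim _ hcv] := @dominated_convergence _ _ _ mu I mIR
  (fun n => EFin \o (fun x => s n * G (s n) x)) (EFin \o H)
  (EFin \o (fun x => A / 2 * x ^+ 2 + B / 2)) mfn mlim cv ig bd.
rewrite -(fineK (integrable_fin_num mIR ilim)) in hcv.
exact: (fine_cvg hcv).
Qed.

Lemma part2 : (t * (gammaR f - Kt t * muQt mu t f)) @[t --> +oo] -->
        Rintegral mu `]0, +oo[ (fun x =>
          Rintegral lebesgue_measure `]0, +oo[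
            (fun y => f y * (y ^+ 2 * (x ^+ 2 + y ^+ 2)) / 2)).
Proof.
have cF : (Rintegral mu I (fun x => Num.max t 1 * G (Num.max t 1) x)) @[t --> +oo]
    --> Rintegral mu I H.
  apply/cvg_pinftyP => u hu.
  apply: (@outer_cvg (fun n => Num.max (u n) 1)).
    apply/cvgryPge => M; move/cvgryPge: hu => /(_ M).
    by apply: filterS => n h; rewrite le_max h.
  by move=> n; rewrite le_max lexx orbT.
apply: cvg_trans cF; apply: near_eq_cvg; near=> t.
have t1 : 1 <= t by near: t; apply: nbhs_pinfty_ge.
have t0 : 0 < t by exact: lt_le_trans ltr01 t1.
rewrite (max_l t1) main_eq // RintegralZl //.
exact: intGmu.
Unshelve. all: by end_near.
Qed.
End mu.

End main.

Unset Implicit Arguments.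
Set Strict Implicit.

Theorem lemma3p2 (R : realType) (f : R -> R) :
  measurable_fun setT f ->
  lebesgue_measure.-integrable `[0, +oo[ (fun x => (`|f x| * x ^+ 2)%:E) ->
  lebesgue_measure.-integrable `[0, +oo[ (fun x => (`|f x| * x ^+ 4)%:E) ->
  (forall (t : R) (mu : probability R R),
      0 < t ->
      mu [set` `]-oo, 0%R]] = 0%E ->
      mu.-integrable `]0, +oo[ (fun x => (x ^+ 2)%:E) ->
      `|gammaR f - Kt t * muQt mu t f|
        <= (Cf f * Rintegral mu `]0, +oo[ (fun x => x ^+ 2) + Cf' f) / t)
  /\
  ((forall x : R, 0 <= x -> 0 <= f x) ->
   forall mu : probability R R,
      mu [set` `]-oo, 0%R]] = 0%E ->
      mu.-integrable `]0, +oo[ (fun x => (x ^+ 2)%:E) ->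
      (t * (gammaR f - Kt t * muQt mu t f)) @[t --> +oo] -->
        Rintegral mu `]0, +oo[ (fun x =>
          Rintegral lebesgue_measure `]0, +oo[
            (fun y => f y * (y ^+ 2 * (x ^+ 2 + y ^+ 2)) / 2))).
Proof.
move=> mf i2 i4; split.
  move=> t mu t0 mu0 imu2.
  exact: (part1 mf i2 i4 mu0 imu2 t0).
move=> _ mu mu0 imu2.
exact: (part2 mf i2 i4 mu0 imu2).
Qed.
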